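(* Let $1<p\le2$ and $T\in(0,\infty)$. For $M\in\mathbb N$ and $h>0$ let non-negative sequences $\{a_m(h)\}_{m=0}^M$, $\{b_m(h)\}_{m=0}^M$, $\{r_m(h,\kappa)\}_{m=1}^M$, $\{s_m(h,\kappa)\}_{m=1}^M$, $\{\rho_m(h,\kappa)\}_{m=1}^M$, $\{\sigma_m(h,\kappa)\}_{m=1}^M$ be given, where $\kappa=T/M$. Assume there exist $\mu_0,\widehat\kappa>0$ such that for all $0<h<1/\sqrt{\mu_0}$ and $0<\kappa<\widehat\kappa$: $$a_0^2\le\mu_0h^2,\ \ b_0^2\le\mu_0h^2,\ \ \kappa\sum_{m=1}^Mr_m^2\le\mu_0h^2,\ \ \kappa\sum_{m=1}^Ms_m^2\le\mu_0h^2,\ \ \kappa\sum_{m=1}^M\rho_m^2\le\mu_0\kappa^2,\ \ \kappa\sum_{m=1}^M\sigma_m^2\le\mu_0\kappa^2.$$ Further, assume there exist constants $\mu_1,\mu_2,\mu_3>0$, $\Lambda>0$ and $0<\theta\le1$ such that for some $\lambda\in[0,\Lambda]$, for all $0<h<1/\sqrt{\mu_0}$, $0<\kappa<\widehat\kappa$ and $m=1,\dots,M$, both $$d_ta_m^2+\mu_1(\lambda+b_m)^{p-2}b_m^2\le b_mr_m+b_m\rho_m+\mu_2b_{m-1}b_m+s_m^2+\sigma_m^2,$$ $$d_ta_m^2+\mu_1(\lambda+b_m)^{p-2}b_m^2\le b_mr_m+b_m\rho_m+\mu_3b_mb_{m-1}^{1-\theta}a_{m-1}^{\theta}+s_m^2+\sigma_m^2$$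 hold (with the convention $(\lambda+b_m)^{p-2}b_m^2=0$ if $\lambda=b_m=0$). Then there exist constants $\overline{\mu_0},\overline\kappa>0$ and $\mu_4,\mu_5>0$, independent of $\lambda$, such that for all $\kappa,h>0$ with $\kappa<\overline\kappa$ and $h^2<\overline{\mu_0}\,\kappa$: $$\max_{0\le m\le M}b_m\le1,\qquad \max_{0\le m\le M}a_m^2+\mu_1(1+\Lambda)^{p-2}\kappa\sum_{m=0}^Mb_m^2\le\mu_4(h^2+\kappa^2)\exp(2\mu_5\kappa M).$$
   Context: $d_ta_m^2=(a_m^2-a_{m-1}^2)/\kappa$ denotes the backward difference quotient with step $\kappa=T/M$. *)

(* Defs.v *)
From HB Require Import structures.
From mathcomp Require Import all_boot all_order all_algebra.
From mathcomp Require Import all_classical all_reals sequences exp.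
Set Implicit Arguments. Unset Strict Implicit. Unset Printing Implicit Defensive.
Import Order.TTheory GRing.Theory Num.Theory.
Local Open Scope ring_scope.

Definition kappa (R : realType) (T : R) (M : nat) : R := T / M%:R.

Definition dt2 (R : realType) (T : R) (M : nat) (x : nat -> R) (m : nat) : R :=
  (x m ^+ 2 - x m.-1 ^+ 2) / kappa T M.

(* (lam + b)^(p-2) * b^2 ; with powR, 0 `^ y * 0 = 0, matching the convention *)
Definition dissip (R : realType) (p lam b : R) : R := (lam + b) `^ (p - 2) * b ^+ 2.

(* Main.v *)
Require Import Defs.
From HB Require Import structures.
From mathcomp Require Import all_boot all_order all_algebra.
From mathcomp Require Import all_classical all_reals sequences exp.
From mathcomp Require Import ring lra.
Import Order.TTheory GRing.Theory Num.Theory.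
Local Open Scope ring_scope.

Lemma split_pow (R : realType) (th d x y : R) : 0 < th -> th <= 1 -> 0 < d ->
  0 <= x -> 0 <= y ->
  x `^ (1 - th) * y `^ th <= d `^ th * x + d `^ (th - 1) * y.
Proof.
move=> th0 th1 d0 x0 y0.
have h1 : 0 <= 1 - th by lra.
case: (leP y (d * x)) => hy.
- have e1 : y `^ th <= d `^ th * x `^ th.
    rewrite -powRM ?(ltW d0) //.
    by apply: (ge0_ler_powR (ltW th0)) hy; rewrite nnegrE // mulr_ge0 // ltW.
  have e2 : x `^ (1 - th) * x `^ th = x.
    rewrite -powRD; last by apply/implyP; rewrite subrK oner_eq0.
    by rewrite subrK powRr1.
  apply: (le_trans (ler_wpM2l (powR_ge0 _ _) e1)).
  by rewrite mulrCA e2 lerDl mulr_ge0 // powR_ge0.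
- have e0 : d `^ (1 - th) * d `^ (th - 1) = 1.
    rewrite -powRD; last by apply/implyP => _; rewrite gt_eqF.
    have -> : 1 - th + (th - 1) = 0 by lra.
    by rewrite powRr0.
  have e1 : x `^ (1 - th) = (x * d) `^ (1 - th) * d `^ (th - 1).
    by rewrite powRM // ?ltW // -mulrA e0 mulr1.
  have e2 : (x * d) `^ (1 - th) <= y `^ (1 - th).
    have hxd : x * d <= y by rewrite mulrC ltW.
    apply: (ge0_ler_powR h1) hxd; rewrite nnegrE //.
    by rewrite mulr_ge0 // ltW.
  have e3 : y `^ (1 - th) * y `^ th = y.
    rewrite -powRD; last by apply/implyP; rewrite subrK oner_eq0.
    by rewrite subrK powRr1.
  rewrite e1.
  apply: (@le_trans _ _ (d `^ (th - 1) * y)); last first.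
    by rewrite lerDr mulr_ge0 // powR_ge0.
  apply: (@le_trans _ _ (y `^ (1 - th) * d `^ (th - 1) * y `^ th)).
    by apply: ler_wpM2r; [exact: powR_ge0|apply: ler_wpM2r; [exact: powR_ge0|exact: e2]].
  by rewrite mulrAC e3 mulrC.
Qed.

Lemma young1 (R : realType) (c x : R) : 0 < c -> x <= c / 16 + 4 / c * x ^+ 2.
Proof.
move=> c0; rewrite -subr_ge0.
have -> : c / 16 + 4 / c * x ^+ 2 - x = (2 * x - c / 4) ^+ 2 / c.
  by field; rewrite gt_eqF.
by rewrite divr_ge0 ?sqr_ge0 ?ltW.
Qed.

Lemma young2 (R : realType) (c x y : R) : 0 < c -> x * y <= c / 8 * x ^+ 2 + 2 / c * y ^+ 2.
Proof.
move=> c0; rewrite -subr_ge0.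
have -> : c / 8 * x ^+ 2 + 2 / c * y ^+ 2 - x * y = (c * x - 4 * y) ^+ 2 / (8 * c).
  by field; rewrite gt_eqF.
by rewrite divr_ge0 ?sqr_ge0 // mulr_ge0 // ltW.
Qed.

Lemma term_le_sum (R : realType) (f : nat -> R) (M m : nat) :
  (forall j, 0 <= f j) -> (1 <= m <= M)%N -> f m <= \sum_(1 <= j < M.+1) f j.
Proof.
move=> f0 /andP[m1 mM].
rewrite (big_cat_nat (n := m)) //=; last by apply: leqW.
rewrite [X in _ + X]big_ltn ?ltnS //=.
rewrite addrCA lerDl addr_ge0 // sumr_ge0 // => i _; exact: f0.
Qed.

Lemma prefix_le_sum (R : realType) (f : nat -> R) (M m : nat) :
  (forall j, 0 <= f j) -> (m <= M)%N ->
  \sum_(1 <= j < m.+1) f j <= \sum_(1 <= j < M.+1) f j.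
Proof.
move=> f0 mM.
rewrite [X in _ <= X](big_cat_nat (n := m.+1)) //=.
by rewrite lerDl sumr_ge0 // => i _; exact: f0.
Qed.

Lemma diss_small (R : realType) (p lam Lam b : R) : 1 < p -> p <= 2 ->
  0 <= lam -> lam <= Lam -> 0 <= b -> b <= 1 ->
  (1 + Lam) `^ (p - 2) * b ^+ 2 <= dissip p lam b.
Proof.
move=> p1 p2 l0 lL b0 b1; rewrite /dissip.
case: (eqVneq b 0) => [->|bn0]; first by rewrite expr0n /= !mulr0.
have bp : 0 < b by rewrite lt_neqAle eq_sym bn0.
apply: ler_wpM2r; first exact: sqr_ge0.
have -> : p - 2 = - (2 - p) by lra.
rewrite !powRN lef_pV2 ?posrE ?powR_gt0 //; try lra.
apply: ge0_ler_powR; rewrite ?nnegrE; lra.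
Qed.

Lemma diss_big (R : realType) (p lam Lam b : R) : 1 < p -> p <= 2 ->
  0 <= lam -> lam <= Lam -> 1 <= b ->
  b / (1 + Lam) <= dissip p lam b.
Proof.
move=> p1 p2 l0 lL b1; rewrite /dissip.
have e1 : (lam + b)^-1 <= (lam + b) `^ (p - 2).
  rewrite -powR_inv1; last by lra.
  apply: ler_powR; lra.
have e2 : ((1 + Lam) * b)^-1 <= (lam + b)^-1.
  rewrite lef_pV2 ?posrE; try nra.
have e3 : b / (1 + Lam) = ((1 + Lam) * b)^-1 * b ^+ 2.
  by field; apply/andP; split; rewrite gt_eqF //; lra.
rewrite e3; apply: ler_wpM2r; first exact: sqr_ge0.
exact: le_trans e2 e1.
Qed.

Lemma div_k (R : realType) (k x y z : R) : 0 < k -> k * x <= y -> y <= k * z -> x <= z.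
Proof. move=> k0 h1 h2; rewrite -(ler_pM2l k0); exact: le_trans h1 h2. Qed.

Lemma step_alg (R : realType) (k c L K a' am bm beta S e d RHS : R) :
  0 <= k -> 0 < c -> L = 2 / c * K ^+ 2 ->
  a' ^+ 2 - am ^+ 2 + k * d <= k * RHS ->
  RHS <= c / 2 * beta ^+ 2 + c / 8 * bm ^+ 2 + 2 / c * (K * am) ^+ 2 + e ->
  c * beta ^+ 2 <= d ->
  0 <= k * L * (k * (c / 8) * bm ^+ 2 + k * (c / 4) * S) ->
  a' ^+ 2 + k * (c / 8) * beta ^+ 2 + k * (c / 4) * (S + beta ^+ 2)
    <= (1 + k * L) * (am ^+ 2 + k * (c / 8) * bm ^+ 2 + k * (c / 4) * S) + k * e.
Proof.
move=> k0 c0 Ld HI hR hD nn.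
have h1 := ler_wpM2l k0 hR.
have h2 := ler_wpM2l k0 hD.
rewrite Ld in nn *; rewrite exprMn in h1.
have : 0 <= k * c * beta ^+ 2 by rewrite mulr_ge0 ?sqr_ge0 // mulr_ge0 // ltW.
lra.
Qed.

Lemma core (R : realType) (M : nat) (k h eps c c' K L E C Q mu0 : R)
  (a b r s rho sig d : nat -> R) :
  0 < k -> k < eps -> eps <= 1 -> h ^+ 2 < eps * k ->
  0 < c -> 0 < c' -> c' <= c -> 0 <= K -> 0 < mu0 ->
  L = 2 / c * K ^+ 2 -> (1 + k * L) ^+ M <= E ->
  C = mu0 * (2 + c + 2 / c) ->
  Q = 2 * E * C + 2 * mu0 + 4 / c' * (2 * mu0 + 2 * K ^+ 2 * E * C) ->
  eps * Q < c' / 4 -> eps * mu0 < 1 ->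
  (forall m, 0 <= a m) -> (forall m, 0 <= b m) -> (forall m, 0 <= r m) ->
  (forall m, 0 <= s m) -> (forall m, 0 <= rho m) -> (forall m, 0 <= sig m) ->
  a 0%N ^+ 2 <= mu0 * h ^+ 2 -> b 0%N ^+ 2 <= mu0 * h ^+ 2 ->
  k * (\sum_(1 <= m < M.+1) r m ^+ 2) <= mu0 * h ^+ 2 ->
  k * (\sum_(1 <= m < M.+1) s m ^+ 2) <= mu0 * h ^+ 2 ->
  k * (\sum_(1 <= m < M.+1) rho m ^+ 2) <= mu0 * k ^+ 2 ->
  k * (\sum_(1 <= m < M.+1) sig m ^+ 2) <= mu0 * k ^+ 2 ->
  (forall m, (1 <= m <= M)%N ->
     (b m <= 1 -> c * b m ^+ 2 <= d m) /\ (1 <= b m -> c' * b m <= d m)) ->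
  (forall m, (1 <= m <= M)%N ->
     (a m ^+ 2 - a m.-1 ^+ 2) / k + d m
       <= b m * r m + b m * rho m + b m * (c' / 4 * b m.-1 + K * a m.-1)
          + s m ^+ 2 + sig m ^+ 2) ->
  (forall m, (m <= M)%N -> b m <= 1) /\
  (forall m, (m <= M)%N ->
     a m ^+ 2 + k * (c / 4) * (\sum_(j < m.+1) b j ^+ 2)
       <= E * C * (h ^+ 2 + k ^+ 2)).
Proof.
move=> k0 keps eps1 hk c0 c'0 cc' K0 mu00 Ldef HE Cdef Qdef epsQ epsmu
  a0 b0 r0 s0 rho0 sig0 ha0 hb0 Sr Ss Srho Ssig Hd Hineq.
have k1 : k <= 1 by lra.
have L0 : 0 <= L by rewrite Ldef mulr_ge0 ?sqr_ge0 // divr_ge0 // ltW.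
have q1 : 1 <= 1 + k * L by rewrite lerDl mulr_ge0 // ltW.
have E1 : 1 <= E by apply: le_trans HE; exact: exprn_ege1.
have q0 : 0 <= 1 + k * L by lra.
have C0 : 0 < C.
  by rewrite Cdef mulr_gt0 // addr_gt0 ?divr_gt0 // addr_gt0 //.
pose e := fun j => 2 / c * (r j ^+ 2 + rho j ^+ 2) + s j ^+ 2 + sig j ^+ 2.
have e0 : forall j, 0 <= e j.
  move=> j; rewrite /e /=; apply: addr_ge0; last exact: sqr_ge0.
  apply: addr_ge0; last exact: sqr_ge0.
  by apply: mulr_ge0; [rewrite divr_ge0 // ltW | rewrite addr_ge0 ?sqr_ge0].
pose G := fun m : nat => a m ^+ 2 + k * (c / 8) * b m ^+ 2
             + k * (c / 4) * (\sum_(j < m.+1) b j ^+ 2).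
pose W := fun m : nat => G 0%N + k * (\sum_(1 <= j < m.+1) e j).
have kc8 : 0 <= k * (c / 8) by apply: mulr_ge0; lra.
have kc4 : 0 <= k * (c / 4) by apply: mulr_ge0; lra.
have sb : forall m, 0 <= \sum_(j < m.+1) b j ^+ 2.
  by move=> m; apply: sumr_ge0 => i _; exact: sqr_ge0.
have G0 : forall m, 0 <= G m.
  move=> m; rewrite /G /=.
  exact: addr_ge0 (addr_ge0 (sqr_ge0 _) (mulr_ge0 kc8 (sqr_ge0 _))) (mulr_ge0 kc4 (sb m)).
have W0 : forall m, 0 <= W m.
  move=> m; rewrite /W /=; apply: addr_ge0 (G0 _) (mulr_ge0 (ltW k0) _).
  by apply: sumr_ge0 => i _; exact: e0.
have hh : h ^+ 2 <= eps by nra.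
have WM : W M <= C * (h ^+ 2 + k ^+ 2).
  have eq1 : k * (\sum_(1 <= j < M.+1) e j) =
      2 / c * (k * (\sum_(1 <= j < M.+1) r j ^+ 2) + k * (\sum_(1 <= j < M.+1) rho j ^+ 2))
      + k * (\sum_(1 <= j < M.+1) s j ^+ 2) + k * (\sum_(1 <= j < M.+1) sig j ^+ 2).
    rewrite /e /= !big_split /= -mulr_sumr big_split /=; ring.
  have eq2 : G 0%N = a 0%N ^+ 2 + k * (c / 8) * b 0%N ^+ 2 + k * (c / 4) * b 0%N ^+ 2.
    by rewrite /G /= big_ord_recr big_ord0 /= add0r.
  have kb : k * b 0%N ^+ 2 <= mu0 * h ^+ 2.
    have := sqr_ge0 (b 0%N); nra.
  have kb' : c * (k * b 0%N ^+ 2) <= c * (mu0 * h ^+ 2) by exact: (ler_wpM2l (ltW c0) kb).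
  have t1 : 2 / c * (k * (\sum_(1 <= j < M.+1) r j ^+ 2) + k * (\sum_(1 <= j < M.+1) rho j ^+ 2))
      <= 2 / c * (mu0 * h ^+ 2 + mu0 * k ^+ 2).
    apply: ler_wpM2l; first by rewrite divr_ge0 // ltW.
    lra.
  rewrite /W eq1 eq2 Cdef.
  have c2 : 0 <= 2 / c by rewrite divr_ge0 // ltW.
  have mk : 0 <= mu0 * k ^+ 2 by exact: mulr_ge0 (ltW mu00) (sqr_ge0 _).
  have mh : 0 <= mu0 * h ^+ 2 by exact: mulr_ge0 (ltW mu00) (sqr_ge0 _).
  have := mulr_ge0 (ltW c0) mh.
  have := mulr_ge0 c2 mk.
  have := mulr_ge0 (ltW c0) mk.
  lra.
have IND : forall m, (m <= M)%N ->
    (forall j, (j <= m)%N -> b j <= 1) /\ G m <= (1 + k * L) ^+ m * W m.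
  elim => [|m IH] hm.
    split.
      move=> j; rewrite leqn0 => /eqP ->.
      have : b 0%N ^+ 2 < 1.
        apply: (le_lt_trans hb0); nra.
      have := b0 0%N; nra.
    rewrite expr0 mul1r /W big_geq // mulr0 addr0 //.
  have [Hb HG] := IH (ltnW hm).
  have hm1 : (1 <= m.+1 <= M)%N by rewrite hm.
  have Pm : (1 + k * L) ^+ m <= E.
    apply: le_trans HE; exact: (ler_weXn2l q1 (ltnW hm)).
  have Wm : W m <= W M.
    rewrite /W /= lerD2l; apply: (ler_wpM2l (ltW k0)); exact: prefix_le_sum e0 (ltnW hm).
  have Gm : G m <= E * (C * (h ^+ 2 + k ^+ 2)).
    exact: (le_trans HG (ler_pM (exprn_ge0 _ q0) (W0 m) Pm (le_trans Wm WM))).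
  have amG : a m ^+ 2 <= G m.
    rewrite /G /= -addrA lerDl.
    exact: addr_ge0 (mulr_ge0 kc8 (sqr_ge0 _)) (mulr_ge0 kc4 (sb m)).
  have ECe : 0 <= 2 * E * C * eps by rewrite !mulr_ge0 //; lra.
  have kk : k ^+ 2 <= eps * k.
    by rewrite expr2; exact: (ler_wpM2r (ltW k0) (ltW keps)).
  have mhk : mu0 * h ^+ 2 <= k * (mu0 * eps).
    rewrite [X in _ <= X]mulrCA ler_pM2l // mulrC; exact: ltW.
  have mkk : mu0 * k ^+ 2 <= k * (mu0 * eps).
    rewrite [X in _ <= X]mulrCA ler_pM2l // mulrC; exact: kk.
  have hk2 : h ^+ 2 + k ^+ 2 <= 2 * eps * k by lra.
  have am2 : a m ^+ 2 <= 2 * E * C * eps * k.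
    apply: (le_trans amG); apply: (le_trans Gm).
    have : E * C * (h ^+ 2 + k ^+ 2) <= E * C * (2 * eps * k).
      apply: ler_wpM2l; last lra.
      by apply: mulr_ge0; lra.
    rewrite mulrA; lra.
  have am3 : a m ^+ 2 <= 2 * E * C * eps.
    apply: (le_trans am2); rewrite -[X in _ <= X]mulr1; apply: (ler_wpM2l ECe).
    lra.
  have rr : r m.+1 ^+ 2 <= mu0 * eps.
    apply: (@div_k _ k _ (mu0 * h ^+ 2) _ k0); last exact: mhk.
    apply: le_trans Sr; apply: (ler_wpM2l (ltW k0)).
    exact: (@term_le_sum _ (fun j => r j ^+ 2) M m.+1 (fun j => sqr_ge0 _) hm1).
  have ss : s m.+1 ^+ 2 <= mu0 * eps.
    apply: (@div_k _ k _ (mu0 * h ^+ 2) _ k0); last exact: mhk.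
    apply: le_trans Ss; apply: (ler_wpM2l (ltW k0)).
    exact: (@term_le_sum _ (fun j => s j ^+ 2) M m.+1 (fun j => sqr_ge0 _) hm1).
  have rhor : rho m.+1 ^+ 2 <= mu0 * eps.
    apply: (@div_k _ k _ (mu0 * k ^+ 2) _ k0); last exact: mkk.
    apply: le_trans Srho; apply: (ler_wpM2l (ltW k0)).
    exact: (@term_le_sum _ (fun j => rho j ^+ 2) M m.+1 (fun j => sqr_ge0 _) hm1).
  have sigr : sig m.+1 ^+ 2 <= mu0 * eps.
    apply: (@div_k _ k _ (mu0 * k ^+ 2) _ k0); last exact: mkk.
    apply: le_trans Ssig; apply: (ler_wpM2l (ltW k0)).
    exact: (@term_le_sum _ (fun j => sig j ^+ 2) M m.+1 (fun j => sqr_ge0 _) hm1).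
  have [Hds Hdb] := Hd _ hm1.
  have HI := Hineq _ hm1; rewrite /= in HI.
  have bm1 : b m <= 1 by apply: Hb.
  set beta := b m.+1 in Hds Hdb HI *.
  set am := a m in amG am2 am3 HI *.
  set bm := b m in bm1 HI *.
  have beta0 : 0 <= beta by apply: b0.
  have am0 : 0 <= am by apply: a0.
  have bm0 : 0 <= bm by apply: b0.
  have rp := r0 m.+1; have rhop := rho0 m.+1; have sp := s0 m.+1; have sigp := sig0 m.+1.
  have Hbeta : beta <= 1.
    case: (leP beta 1) => // hbig; exfalso.
    have hd := Hdb (ltW hbig).
    have hX : - (2 * E * C * eps) <= (a m.+1 ^+ 2 - am ^+ 2) / k.
      have t1 : am ^+ 2 / k <= 2 * E * C * eps by rewrite ler_pdivrMr.
      have t2 : 0 <= a m.+1 ^+ 2 / k by rewrite divr_ge0 ?sqr_ge0 ?ltW.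
      rewrite mulrBl; lra.
    have y1 := @young1 _ c' (r m.+1) c'0.
    have y2 := @young1 _ c' (rho m.+1) c'0.
    have y3 := @young1 _ c' (K * am) c'0.
    set Z := r m.+1 ^+ 2 + rho m.+1 ^+ 2 + (K * am) ^+ 2.
    have yy : r m.+1 + rho m.+1 + K * am <= 3 * c' / 16 + 4 / c' * Z.
      rewrite /Z !mulrDr; lra.
    have Zb : Z <= 2 * mu0 * eps + 2 * K ^+ 2 * E * C * eps.
      rewrite /Z exprMn.
      have : K ^+ 2 * am ^+ 2 <= K ^+ 2 * (2 * E * C * eps) by exact: (ler_wpM2l (sqr_ge0 _) am3).
      lra.
    have Zc : 4 / c' * Z <= 4 / c' * (2 * mu0 * eps + 2 * K ^+ 2 * E * C * eps).
      by apply: ler_wpM2l Zb; rewrite divr_ge0 // ltW.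
    set P := 2 * E * C * eps + s m.+1 ^+ 2 + sig m.+1 ^+ 2.
    have P0 : 0 <= P by rewrite /P !addr_ge0 ?sqr_ge0 // !mulr_ge0 ?ltW //; lra.
    have hP : P <= beta * P by apply: (ler_peMl P0); lra.
    have hbb : beta * bm <= beta * 1 by exact: (ler_wpM2l beta0 bm1).
    have hY : beta * (r m.+1 + rho m.+1 + K * am) <= beta * (3 * c' / 16 + 4 / c' * Z).
      exact: (ler_wpM2l beta0 yy).
    have key : beta * c' <= beta * (P + 3 * c' / 16 + 4 / c' * Z + c' / 4).
      have Pdef : P = 2 * E * C * eps + s m.+1 ^+ 2 + sig m.+1 ^+ 2 by [].
      have c'4 : 0 <= c' / 4 by apply: divr_ge0; lra.
      have hbb' : beta * (c' / 4 * bm) <= beta * (c' / 4 * 1).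
        exact: (ler_wpM2l beta0 (ler_wpM2l c'4 bm1)).
      clearbody P; lra.
    have key2 : c' <= P + 3 * c' / 16 + 4 / c' * Z + c' / 4.
      have bpos : 0 < beta by lra.
      by rewrite -(ler_pM2l bpos).
    have : eps * Q = 2 * E * C * eps + 2 * mu0 * eps + 4 / c' * (2 * mu0 * eps + 2 * K ^+ 2 * E * C * eps).
      by rewrite Qdef; ring.
    rewrite /P in key2; lra.
    have Hd2 := Hds Hbeta.
  have HI' : a m.+1 ^+ 2 - am ^+ 2 + k * d m.+1 <=
      k * (beta * r m.+1 + beta * rho m.+1 + beta * (c' / 4 * bm + K * am)
          + s m.+1 ^+ 2 + sig m.+1 ^+ 2).
    have := ler_wpM2l (ltW k0) HI.
    by rewrite mulrDr [k * (_ / k)]mulrC divfK ?gt_eqF.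
  have y1 := @young2 _ c beta (r m.+1) c0.
  have y2 := @young2 _ c beta (rho m.+1) c0.
  have y3 := @young2 _ c beta (K * am) c0.
  have y4 : beta * (c' / 4 * bm) <= c / 8 * (beta ^+ 2 + bm ^+ 2).
    have h1 : beta * (c' / 4 * bm) <= c / 4 * (beta * bm).
      rewrite mulrCA; apply: ler_wpM2r; [exact: mulr_ge0 beta0 bm0 | lra].
    have h2 : 2 * (beta * bm) <= beta ^+ 2 + bm ^+ 2.
      have := sqr_ge0 (beta - bm).
      have -> : (beta - bm) ^+ 2 = beta ^+ 2 + bm ^+ 2 - 2 * (beta * bm) by ring.
      lra.
    have h3 : c / 4 * (2 * (beta * bm)) <= c / 4 * (beta ^+ 2 + bm ^+ 2).
      apply: ler_wpM2l h2; lra.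
    lra.
  have hR : beta * r m.+1 + beta * rho m.+1 + beta * (c' / 4 * bm + K * am)
          + s m.+1 ^+ 2 + sig m.+1 ^+ 2 <=
      c / 2 * beta ^+ 2 + c / 8 * bm ^+ 2 + 2 / c * (K * am) ^+ 2 + e m.+1.
    rewrite /e mulrDr; lra.
  have Gm1 : G m.+1 <= (1 + k * L) * G m + k * e m.+1.
    have eqG : G m.+1 = a m.+1 ^+ 2 + k * (c / 8) * beta ^+ 2
        + k * (c / 4) * (\sum_(j < m.+1) b j ^+ 2 + beta ^+ 2).
      by rewrite /G big_ord_recr.
    have eqGm : G m = am ^+ 2 + k * (c / 8) * bm ^+ 2
        + k * (c / 4) * (\sum_(j < m.+1) b j ^+ 2) by [].
    have nn : 0 <= k * L * (k * (c / 8) * bm ^+ 2 + k * (c / 4) * (\sum_(j < m.+1) b j ^+ 2)).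
      apply: mulr_ge0; first by apply: mulr_ge0; lra.
      exact: addr_ge0 (mulr_ge0 kc8 (sqr_ge0 _)) (mulr_ge0 kc4 (sb m)).
    rewrite eqG eqGm.
    exact: (@step_alg _ k c L K _ _ _ _ _ _ _ _ (ltW k0) c0 Ldef HI' hR Hd2 nn).
  split.
    move=> j; rewrite leq_eqVlt => /orP [/eqP -> //|]; rewrite ltnS; exact: Hb.
  have eqW : W m.+1 = W m + k * e m.+1.
    by rewrite /W big_nat_recr //= mulrDr addrA.
  rewrite eqW exprS.
  have qP : 1 <= (1 + k * L) * (1 + k * L) ^+ m by rewrite -exprS exprn_ege1.
  have ke0 : 0 <= k * e m.+1 by exact: mulr_ge0 (ltW k0) (e0 _).
  have t1 : k * e m.+1 <= (1 + k * L) * (1 + k * L) ^+ m * (k * e m.+1) by exact: (ler_peMl ke0 qP).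
  have t2 : (1 + k * L) * G m <= (1 + k * L) * ((1 + k * L) ^+ m * W m).
    apply: ler_wpM2l HG; lra.
  rewrite mulrDr; lra.
split.
  by move=> m hm; have [Hb _] := IND m hm; exact: Hb.
move=> m hm; have [_ HG] := IND m hm.
have Pm : (1 + k * L) ^+ m <= E.
  apply: le_trans HE; exact: (ler_weXn2l q1 hm).
have Wm : W m <= W M.
  rewrite /W /= lerD2l; apply: (ler_wpM2l (ltW k0)); exact: prefix_le_sum e0 hm.
have Gm : G m <= E * (C * (h ^+ 2 + k ^+ 2)).
  exact: (le_trans HG (ler_pM (exprn_ge0 _ q0) (W0 m) Pm (le_trans Wm WM))).
rewrite -[E * C * _]mulrA; apply: (le_trans _ Gm).
have := mulr_ge0 kc8 (sqr_ge0 (b m)); rewrite /G /=; lra.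
Qed.

Theorem lemma2p4 (R : realType) (p T mu0 khat mu1 mu2 mu3 Lam theta : R) :
  1 < p -> p <= 2 -> 0 < T -> 0 < mu0 -> 0 < khat ->
  0 < mu1 -> 0 < mu2 -> 0 < mu3 -> 0 < Lam -> 0 < theta -> theta <= 1 ->
  exists mu0bar kbar mu4 mu5 : R,
    [/\ 0 < mu0bar, 0 < kbar, 0 < mu4 & 0 < mu5] /\
    forall (lam : R) (a b r s rho sigma : R -> nat -> nat -> R),
      0 <= lam -> lam <= Lam ->
      (* non-negativity of all sequences *)
      (forall h M m, 0 <= a h M m) -> (forall h M m, 0 <= b h M m) ->
      (forall h M m, 0 <= r h M m) -> (forall h M m, 0 <= s h M m) ->
      (forall h M m, 0 <= rho h M m) -> (forall h M m, 0 <= sigma h M m) ->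
      (* data assumptions *)
      (forall h M, 0 < h -> h < (Num.sqrt mu0)^-1 ->
         0 < kappa T M -> kappa T M < khat ->
         (a h M 0%N ^+ 2 <= mu0 * h ^+ 2 /\ b h M 0%N ^+ 2 <= mu0 * h ^+ 2) /\
         [/\
             kappa T M * (\sum_(1 <= m < M.+1) r h M m ^+ 2) <= mu0 * h ^+ 2,
             kappa T M * (\sum_(1 <= m < M.+1) s h M m ^+ 2) <= mu0 * h ^+ 2,
             kappa T M * (\sum_(1 <= m < M.+1) rho h M m ^+ 2)
               <= mu0 * kappa T M ^+ 2 &
             kappa T M * (\sum_(1 <= m < M.+1) sigma h M m ^+ 2)
               <= mu0 * kappa T M ^+ 2]) ->
      (* the two discrete energy inequalities *)
      (forall h M m, 0 < h -> h < (Num.sqrt mu0)^-1 ->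
         0 < kappa T M -> kappa T M < khat -> (1 <= m <= M)%N ->
         dt2 T M (a h M) m + mu1 * dissip p lam (b h M m)
           <= b h M m * r h M m + b h M m * rho h M m
              + mu2 * b h M m.-1 * b h M m
              + s h M m ^+ 2 + sigma h M m ^+ 2
         /\
         dt2 T M (a h M) m + mu1 * dissip p lam (b h M m)
           <= b h M m * r h M m + b h M m * rho h M m
              + mu3 * b h M m * (b h M m.-1) `^ (1 - theta)
                  * (a h M m.-1) `^ theta
              + s h M m ^+ 2 + sigma h M m ^+ 2) ->
      (* conclusion *)
      forall h M, 0 < h -> 0 < kappa T M -> kappa T M < kbar ->
        h ^+ 2 < mu0bar * kappa T M ->
        (forall m, (m <= M)%N -> b h M m <= 1) /\
        \big[Num.max/0]_(m < M.+1) (a h M m ^+ 2)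
          + mu1 * (1 + Lam) `^ (p - 2) * kappa T M
              * (\sum_(m < M.+1) b h M m ^+ 2)
        <= mu4 * (h ^+ 2 + kappa T M ^+ 2)
             * expR (2 * mu5 * kappa T M * M%:R).
Proof.
move=> p1 p2 T0 mu00 khat0 mu10 mu20 mu30 Lam0 th0 th1.
have L1 : 0 < 1 + Lam by lra.
pose c0 := (1 + Lam) `^ (p - 2).
have c00 : 0 < c0 by apply: powR_gt0.
pose c := mu1 * c0.
have cpos : 0 < c by apply: mulr_gt0.
pose c' := mu1 / (1 + Lam).
have c'pos : 0 < c' by apply: divr_gt0.
have c'c : c' <= c.
  rewrite /c' /c ler_pM2l // -powR_inv1; last by lra.
  by apply: ler_powR; lra.
pose delta := (c' / (4 * mu3)) `^ (theta^-1).
have dpos : 0 < delta by apply: powR_gt0; apply: divr_gt0 => //; lra.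
have tdef : delta `^ theta = c' / (4 * mu3).
  rewrite /delta -powRrM mulVf ?gt_eqF // powRr1 //.
  by apply: divr_ge0; lra.
pose K := mu3 * delta `^ (theta - 1).
have Kpos : 0 < K by apply: mulr_gt0 => //; apply: powR_gt0.
pose L := 2 / c * K ^+ 2.
have Lpos : 0 < L by apply: mulr_gt0; [apply: divr_gt0 | apply: exprn_gt0].
pose E := expR (L * T).
have Epos : 0 < E by apply: expR_gt0.
pose C := mu0 * (2 + c + 2 / c).
have Cpos : 0 < C.
  apply: mulr_gt0 => //; apply: addr_gt0; last by apply: divr_gt0.
  by apply: addr_gt0.
pose Q := 2 * E * C + 2 * mu0 + 4 / c' * (2 * mu0 + 2 * K ^+ 2 * E * C).
have Qpos : 0 < Q.
  apply: addr_gt0; first by apply: addr_gt0; apply: mulr_gt0 => //; apply: mulr_gt0.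
  apply: mulr_gt0; first by apply: divr_gt0.
  apply: addr_gt0; first by apply: mulr_gt0.
  by apply: mulr_gt0 => //; apply: mulr_gt0 => //; apply: mulr_gt0 => //;
    apply: mulr_gt0 => //; apply: exprn_gt0.
pose D := 1 + khat^-1 + 2 * mu0 + 4 * Q / c'.
have i1 : 0 < khat^-1 by rewrite invr_gt0.
have i2 : 0 < 4 * Q / c' by apply: divr_gt0 => //; apply: mulr_gt0.
have Dpos : 0 < D by rewrite /D; lra.
pose eps := D^-1.
have epos : 0 < eps by rewrite invr_gt0.
have eD : eps * D = 1 by rewrite mulVf ?gt_eqF.
have eD' : eps + eps * khat^-1 + eps * (2 * mu0) + eps * (4 * Q / c') = 1.
  by have := eD; rewrite /D !mulrDr mulr1.
have f1 : 0 < eps * khat^-1 by apply: mulr_gt0.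
have f2 : 0 < eps * (2 * mu0) by apply: mulr_gt0 => //; apply: mulr_gt0.
have f3 : 0 < eps * (4 * Q / c') by apply: mulr_gt0.
have eps1 : eps <= 1 by lra.
have epsk : eps < khat.
  have : eps * khat^-1 < 1 by lra.
  by rewrite ltr_pdivrMr // mul1r.
have epsmu : eps * mu0 < 1.
  have : eps * (2 * mu0) = 2 * (eps * mu0) by ring.
  have : 0 < eps * mu0 by apply: mulr_gt0.
  lra.
have epsQ : eps * Q < c' / 4.
  have h1 : eps * Q * 4 / c' < 1.
    have -> : eps * Q * 4 / c' = eps * (4 * Q / c') by ring.
    lra.
  rewrite ltr_pdivrMr // mul1r in h1.
  rewrite ltr_pdivlMr //; lra.
exists eps, eps, (5 * C), (L / 2).
split.
  split => //; [by apply: mulr_gt0 | by apply: divr_gt0].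
move=> lam a b r s rho sigma l0 lL ha hb hr hs hrho hsig Hdata Hineq h M h0 k0 kb hh.
have kM : kappa T M * M%:R = T.
  have Mn0 : M%:R != 0 :> R.
    apply/negP => /eqP HM.
    by move: k0; rewrite /kappa HM invr0 mulr0 ltxx.
  by rewrite /kappa divfK.
have hsq : h < (Num.sqrt mu0)^-1.
  have hm : h ^+ 2 < mu0^-1.
    have : eps < mu0^-1 by rewrite -[mu0^-1]mul1r ltr_pdivlMr.
    have : h ^+ 2 < eps by apply: (lt_trans hh); rewrite gtr_pMr //; lra.
    lra.
  rewrite -sqrtrV ?ltW // -[h]ger0_norm ?ltW // -sqrtr_sqr ltr_sqrt //.
  by rewrite invr_gt0.
have kh : kappa T M < khat by lra.
have [[ha0 hb0] [Sr Ss Srho Ssig]] := Hdata h M h0 hsq k0 kh.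
have HE : (1 + kappa T M * L) ^+ M <= E.
  have e1 : (1 + kappa T M * L) ^+ M <= expR (kappa T M * L) ^+ M.
    apply: lerXn2r; rewrite ?nnegrE ?expR_ge0 ?expR_ge1Dx //.
    apply: addr_ge0 => //; apply: mulr_ge0; lra.
  have eq : expR (kappa T M * L) ^+ M = E.
    rewrite -expRM_natr.
    have -> : kappa T M * L * M%:R = L * (kappa T M * M%:R) by ring.
    by rewrite kM.
  by rewrite eq in e1.
have Hd : forall m, (1 <= m <= M)%N ->
    (b h M m <= 1 -> c * b h M m ^+ 2 <= mu1 * dissip p lam (b h M m)) /\
    (1 <= b h M m -> c' * b h M m <= mu1 * dissip p lam (b h M m)).
  move=> m hm; split => hbm.
    rewrite /c -mulrA; apply: ler_wpM2l; first lra.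
    exact: (@diss_small _ p lam Lam (b h M m) p1 p2 l0 lL (hb h M m) hbm).
  have -> : c' * b h M m = mu1 * (b h M m / (1 + Lam)) by rewrite /c'; ring.
  apply: ler_wpM2l; first lra.
  exact: (@diss_big _ p lam Lam (b h M m) p1 p2 l0 lL hbm).
have Hin : forall m, (1 <= m <= M)%N ->
    (a h M m ^+ 2 - a h M m.-1 ^+ 2) / kappa T M + mu1 * dissip p lam (b h M m)
    <= b h M m * r h M m + b h M m * rho h M m
       + b h M m * (c' / 4 * b h M m.-1 + K * a h M m.-1)
       + s h M m ^+ 2 + sigma h M m ^+ 2.
  move=> m hm.
  have [_ H2] := Hineq h M m h0 hsq k0 kh hm.
  rewrite /dt2 in H2.
  have sp := @split_pow _ theta delta (b h M m.-1) (a h M m.-1) th0 th1 dpos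
    (hb _ _ _) (ha _ _ _).
  have hX : mu3 * b h M m * b h M m.-1 `^ (1 - theta) * a h M m.-1 `^ theta
      <= b h M m * (c' / 4 * b h M m.-1 + K * a h M m.-1).
    have e1 : mu3 * b h M m * b h M m.-1 `^ (1 - theta) * a h M m.-1 `^ theta
      = b h M m * (mu3 * (b h M m.-1 `^ (1 - theta) * a h M m.-1 `^ theta)) by ring.
    rewrite e1; apply: ler_wpM2l; first exact: hb.
    apply: (le_trans (ler_wpM2l (ltW mu30) sp)).
    have eqX : mu3 * (delta `^ theta * b h M m.-1 + delta `^ (theta - 1) * a h M m.-1)
        = c' / 4 * b h M m.-1 + K * a h M m.-1 :> R.
      rewrite tdef /K; field; lra.
    by rewrite eqX.
  lra.
have [Hb Hen] := @core R M (kappa T M) h eps c c' K L E C Q mu0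
  (a h M) (b h M) (r h M) (s h M) (rho h M) (sigma h M)
  (fun m => mu1 * dissip p lam (b h M m))
  k0 kb eps1 hh cpos c'pos c'c (ltW Kpos) mu00 erefl HE erefl erefl epsQ epsmu
  (ha h M) (hb h M) (hr h M) (hs h M) (hrho h M) (hsig h M)
  ha0 hb0 Sr Ss Srho Ssig Hd Hin.
split; first exact: Hb.
set B := E * C * (h ^+ 2 + kappa T M ^+ 2).
have B0 : 0 <= B.
  by apply: mulr_ge0; [apply: mulr_ge0; lra | apply: addr_ge0; apply: sqr_ge0].
have sb : 0 <= kappa T M * (c / 4) * (\sum_(j < M.+1) b h M j ^+ 2).
  apply: mulr_ge0; first by apply: mulr_ge0; lra.
  by apply: sumr_ge0 => i _; exact: sqr_ge0.
have hmax : \big[Num.max/0]_(m < M.+1) (a h M m ^+ 2) <= B.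
  apply: (big_ind (fun x => x <= B)) => //.
    by move=> x y hx hy; rewrite ge_max hx hy.
  move=> i _; have := Hen i (ltn_ord i); rewrite -/B.
  have : 0 <= kappa T M * (c / 4) * (\sum_(j < i.+1) b h M j ^+ 2).
    apply: mulr_ge0; first by apply: mulr_ge0; lra.
    by apply: sumr_ge0 => j _; exact: sqr_ge0.
  lra.
have hsum := Hen M (leqnn M); rewrite -/B in hsum.
have hex : expR (2 * (L / 2) * kappa T M * M%:R) = E.
  have -> : 2 * (L / 2) * kappa T M * M%:R = L * (kappa T M * M%:R) by field.
  by rewrite kM.
rewrite hex.
have -> : mu1 * (1 + Lam) `^ (p - 2) * kappa T M * (\sum_(m < M.+1) b h M m ^+ 2)
   = 4 * (kappa T M * (c / 4) * (\sum_(j < M.+1) b h M j ^+ 2)) by rewrite /c /c0; field.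
have -> : 5 * C * (h ^+ 2 + kappa T M ^+ 2) * E = 5 * B by rewrite /B; ring.
have := sqr_ge0 (a h M M).
lra.
Qed.
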